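(* Let $(A,\mathfrak m)$ be a Noetherian local ring with infinite residue field, $\mathfrak q$ an $\mathfrak m$-primary ideal, $M$ a finitely generated $A$-module of dimension one, $\mathbb M=\{M_j\}_{j\ge0}$ a good $\mathfrak q$-filtration of $M$, $a$ an $\mathbb M$-superficial element for $\mathfrak q$ and $J=(a)$. Let $\mathbb N=\{a^jM\}_{j\ge0}$ and let $\mathbb E$ be the filtration $M\supseteq M_1\supseteq aM_1\supseteq a^2M_1\supseteq\cdots$ (i.e. $E_0=M$, $E_n=a^{n-1}M_1$ for $n\ge1$). Then $$e_1(\mathbb E)-e_1(\mathbb N)\ge e_0(\mathbb M)-h_0(\mathbb M),$$ where $h_0(\mathbb M)=\lambda(M/M_1)$.
   Context: $\lambda$ denotes length. A $\mathfrak q$-filtration of $M$ is a chain of submodules $M=M_0\supseteq M_1\supseteq\cdots$ with $\mathfrak qM_j\subseteq M_{j+1}$; it is good if $M_{j+1}=\mathfrak qM_j$ for $j\gg0$ (similarly for the ideal $J$; $\mathbb E$ and $\mathbb N$ are good $J$-filtrations). For such a filtration $\{F_j\}$ of the one-dimensional module $M$, write $\sum_{j\ge0}\lambda(F_j/F_{j+1})z^j=h(z)/(1-z)$ with $h\in\mathbb Z[z]$ and $e_i=h^{(i)}(1)/i!$; $h_0=h(0)$. An element $a\in\mathfrak q$ is $\mathbb M$-superficial for $\mathfrak q$ if there is $c\ge0$ with $(M_{j+1}:_Ma)\cap M_c=M_j$ for all $j\ge c$. *)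

(* Defs.v *)
From mathcomp Require Import all_boot all_algebra.
Set Implicit Arguments. Unset Strict Implicit. Unset Printing Implicit Defensive.
Import GRing.Theory.
Local Open Scope ring_scope.

Definition mset (T : Type) := T -> Prop.
Definition msub (T : Type) (A B : mset T) := forall x, A x -> B x.
Definition meq (T : Type) (A B : mset T) := forall x, A x <-> B x.
Definition mssub (T : Type) (A B : mset T) := msub A B /\ exists x, B x /\ ~ A x.

Definition is_ideal (R : comNzRingType) (I : mset R) :=
  [/\ I 0, (forall x y, I x -> I y -> I (x + y)) & (forall r x, I x -> I (r * x))].
Definition is_prime (R : comNzRingType) (P : mset R) :=
  [/\ is_ideal P, ~ P 1 & forall x y, P (x * y) -> P x \/ P y].
Definition is_unit_el (R : comNzRingType) (x : R) := exists y, x * y = 1.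

Definition noetherian (R : comNzRingType) :=
  forall I : nat -> mset R, (forall n, is_ideal (I n)) ->
    (forall n, msub (I n) (I n.+1)) ->
    exists N, forall n, (N <= n)%N -> meq (I n) (I N).

(* (R, m) is local: m is a proper ideal and every element outside m is a unit
   (so m is the unique maximal ideal). *)
Definition is_local (R : comNzRingType) (m : mset R) :=
  [/\ is_ideal m, ~ m 1 & forall x, ~ m x -> is_unit_el x].

(* The residue field R/m is infinite: infinitely many pairwise distinct classes. *)
Definition infinite_residue (R : comNzRingType) (m : mset R) :=
  exists f : nat -> R, forall i j, i <> j -> ~ m (f i - f j).

Definition m_primary (R : comNzRingType) (m q : mset R) :=
  [/\ is_ideal q, msub q m & forall x, m x -> exists n, q (x ^+ n)].

Definition is_submod (R : comNzRingType) (M : lmodType R) (N : mset M) :=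
  [/\ N 0, (forall x y, N x -> N y -> N (x + y)) & (forall (r : R) x, N x -> N (r *: x))].

Definition fin_gen (R : comNzRingType) (M : lmodType R) :=
  exists n (g : 'I_n -> M), forall x : M, exists c : 'I_n -> R, x = \sum_i c i *: g i.

(* Krull dimension of M is one: dim (R / Ann M) = 1. *)
Definition ann (R : comNzRingType) (M : lmodType R) : mset R :=
  fun r => forall x : M, r *: x = 0.
Definition prime_chain_above (R : comNzRingType) (I : mset R) (n : nat) :=
  exists p : nat -> mset R,
    (forall i, (i <= n)%N -> is_prime (p i) /\ msub I (p i)) /\
    (forall i, (i < n)%N -> mssub (p i) (p i.+1)).
Definition module_dim_one (R : comNzRingType) (M : lmodType R) :=
  prime_chain_above (ann M) 1 /\ ~ prime_chain_above (ann M) 2.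

(* Length lambda(P/N) = n : maximal length of a strict chain of submodules
   N = C_0 < C_1 < ... < C_n = P. *)
Definition strict_chain (R : comNzRingType) (M : lmodType R) (P N : mset M) (n : nat) :=
  exists c : nat -> mset M,
    [/\ meq (c 0%N) N, meq (c n) P, (forall i, (i <= n)%N -> is_submod (c i))
      & (forall i, (i < n)%N -> mssub (c i) (c i.+1))].
Definition has_length (R : comNzRingType) (M : lmodType R) (P N : mset M) (n : nat) :=
  strict_chain P N n /\ forall k, strict_chain P N k -> (k <= n)%N.

Definition ideal_mul (R : comNzRingType) (M : lmodType R) (q : mset R) (N : mset M) : mset M :=
  fun x => exists n (r : 'I_n -> R) (y : 'I_n -> M),
    (forall i, q (r i) /\ N (y i)) /\ x = \sum_i r i *: y i.

Definition q_filtration (R : comNzRingType) (M : lmodType R) (q : mset R) (F : nat -> mset M) :=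
  [/\ (forall x, F 0%N x), (forall j, is_submod (F j)),
      (forall j, msub (F j.+1) (F j)) & (forall j, msub (ideal_mul q (F j)) (F j.+1))].
Definition good_filtration (R : comNzRingType) (M : lmodType R) (q : mset R) (F : nat -> mset M) :=
  q_filtration q F /\ exists j0, forall j, (j0 <= j)%N -> meq (F j.+1) (ideal_mul q (F j)).

Definition superficial (R : comNzRingType) (M : lmodType R) (q : mset R) (F : nat -> mset M) (a : R) :=
  q a /\ exists c, forall j, (c <= j)%N ->
    meq (fun x => F j.+1 (a *: x) /\ F c x) (F j).

Definition N_filt (R : comNzRingType) (M : lmodType R) (a : R) : nat -> mset M :=
  fun j x => exists y : M, x = a ^+ j *: y.
Definition E_filt (R : comNzRingType) (M : lmodType R) (a : R) (F : nat -> mset M) : nat -> mset M :=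
  fun n x => match n with
             | 0%N => True
             | k.+1 => exists y, F 1%N y /\ x = a ^+ k *: y
             end.

(* h is the numerator of the Hilbert series of F:
   sum_j lambda(F_j/F_{j+1}) z^j = h(z)/(1-z). *)
Definition hilb_num (R : comNzRingType) (M : lmodType R) (F : nat -> mset M) (h : {poly int}) :=
  forall j, exists n, has_length (F j) (F j.+1) n /\ (n%:Z = \sum_(i < j.+1) h`_i).

(* e_i = h^{(i)}(1)/i! *)
Definition hilb_e (i : nat) (h : {poly int}) : int := (h^`N(i)).[1].

(* Main.v *)
Require Import Defs.
From mathcomp Require Import all_boot all_algebra.
From mathcomp Require Import zify.
From Stdlib Require Import Classical FunctionalExtensionality PropExtensionality.
Import GRing.Theory Num.Theory.
Local Open Scope ring_scope.
Set Implicit Arguments. Unset Strict Implicit.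

Definition sh (h : {poly int}) (j : nat) : int := \sum_(i < j.+1) h`_i.

Lemma sum_sh (h : {poly int}) N :
  \sum_(j < N) sh h j = \sum_(i < N) h`_i *+ (N - i).
Proof.
elim: N => [|N IH]; first by rewrite !big_ord0.
rewrite big_ord_recr /= IH /sh.
rewrite [X in _ = X]big_ord_recr /= subSnn mulr1n.
rewrite big_ord_recr /= addrA -big_split /=.
congr (_ + _); apply: eq_bigr => i _.
by rewrite subSn ?mulrSr // ltnW.
Qed.

Lemma hor1 (h : {poly int}) N : (size h <= N)%N -> h.[1] = \sum_(i < N) h`_i.
Proof.
by move=> le; rewrite (horner_coef_wide _ le); apply: eq_bigr => i _; rewrite expr1n mulr1.
Qed.

Lemma he1 (h : {poly int}) N : (size h <= N)%N -> hilb_e 1 h = \sum_(i < N) h`_i *+ i.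
Proof.
move=> le; rewrite /hilb_e.
have le' : (size h^`N(1) <= N)%N.
  rewrite /nderivn; apply: leq_trans (size_poly _ _) _.
  by apply: leq_trans (leq_subr _ _) le.
rewrite (horner_coef_wide _ le').
rewrite (eq_bigr (fun i : 'I_N => h`_(i.+1) *+ i.+1)); last first.
  by move=> i _; rewrite coef_nderivn expr1n mulr1 add1n bin1.
have -> : \sum_(i < N) h`_i.+1 *+ i.+1 = \sum_(i < N.+1) h`_i *+ i.
  by rewrite big_ord_recl /= mulr0n add0r.
by rewrite big_ord_recr /= (nth_default _ le) mul0rn addr0.
Qed.

Lemma sum_sh_big (h : {poly int}) N : (size h <= N)%N ->
  \sum_(j < N) sh h j = h.[1] *+ N - hilb_e 1 h.
Proof.
move=> le; rewrite sum_sh (hor1 le) (he1 le) -sumrMnl -sumrB.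
by apply: eq_bigr => i _; rewrite mulrnBr // ltnW.
Qed.

Lemma sh_big (h : {poly int}) j : (size h <= j.+1)%N -> sh h j = h.[1].
Proof. by move=> le; rewrite (hor1 le). Qed.

Section Chains.
Variables (R : comNzRingType) (M : lmodType R).
Implicit Types (A B C X Y : mset M) (k n : nat).

Definition mall : mset M := fun _ => True.
Definition msum A B : mset M := fun z => exists x y, A x /\ B y /\ z = x + y.
Definition mcap A B : mset M := fun z => A z /\ B z.
Definition mimg (r : R) A : mset M := fun z => exists y, A y /\ z = r *: y.
Definition mpre (r : R) A C : mset M := fun x => A x /\ C (r *: x).

Lemma mext A B : meq A B -> A = B.
Proof.
move=> H; apply: functional_extensionality => x.
by apply: propositional_extensionality; apply: H.
Qed.

Lemma meqq A : meq A A.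
Proof. by []. Qed.
Hint Resolve meqq : core.

Lemma msubE A B : msub A B -> msub B A -> A = B.
Proof. by move=> H1 H2; apply: mext => x; split; [apply: H1|apply: H2]. Qed.

Lemma sub0 A : is_submod A -> A 0.
Proof. by case. Qed.
Lemma subD A x y : is_submod A -> A x -> A y -> A (x + y).
Proof. by case=> _ H _; apply: H. Qed.
Lemma subZ A (r : R) x : is_submod A -> A x -> A (r *: x).
Proof. by case=> _ _ H; apply: H. Qed.
Lemma subN A x : is_submod A -> A x -> A (- x).
Proof. by move=> SA Ax; rewrite -scaleN1r; apply: subZ. Qed.
Lemma subB A x y : is_submod A -> A x -> A y -> A (x - y).
Proof. by move=> SA Ax Ay; apply: subD => //; apply: subN. Qed.

Lemma mall_sub : is_submod mall.
Proof. by []. Qed.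

Lemma msum_sub A B : is_submod A -> is_submod B -> is_submod (msum A B).
Proof.
move=> SA SB; split.
- by exists 0, 0; split; [apply: sub0 | split; [apply: sub0 | rewrite addr0]].
- move=> _ _ [x1 [y1 [A1 [B1 ->]]]] [x2 [y2 [A2 [B2 ->]]]].
  exists (x1 + x2), (y1 + y2); split; first exact: subD.
  by split; [apply: subD | rewrite addrACA].
- move=> r _ [x [y [Ax [By ->]]]]; exists (r *: x), (r *: y).
  by split; [apply: subZ | split; [apply: subZ | rewrite scalerDr]].
Qed.

Lemma mcap_sub A B : is_submod A -> is_submod B -> is_submod (mcap A B).
Proof.
move=> SA SB; split; first by split; apply: sub0.
- by move=> x y [??] [??]; split; apply: subD.
- by move=> r x [??]; split; apply: subZ.
Qed.

Lemma mimg_sub r A : is_submod A -> is_submod (mimg r A).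
Proof.
move=> SA; split.
- by exists 0; rewrite scaler0; split => //; apply: sub0.
- move=> _ _ [x [Ax ->]] [y [Ay ->]]; exists (x + y).
  by rewrite scalerDr; split => //; apply: subD.
- move=> s _ [x [Ax ->]]; exists (s *: x).
  by rewrite !scalerA mulrC; split => //; apply: subZ.
Qed.

Lemma mpre_sub r A C : is_submod A -> is_submod C -> is_submod (mpre r A C).
Proof.
move=> SA SC; split.
- by split; rewrite ?scaler0; apply: sub0.
- by move=> x y [??] [??]; split; rewrite ?scalerDr; apply: subD.
- move=> s x [??]; split; first exact: subZ.
  by rewrite scalerA mulrC -scalerA; apply: subZ.
Qed.

Lemma sc_mono (c : nat -> mset M) n :
  (forall i, (i < n)%N -> mssub (c i) (c i.+1)) ->
  forall i j, (i <= j)%N -> (j <= n)%N -> msub (c i) (c j).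
Proof.
move=> H i j lij ljn; elim: j lij ljn => [|j IH].
  by rewrite leqn0 => /eqP -> _.
rewrite leq_eqVlt => /orP [/eqP -> _ //|lij] ljn.
move=> x /(IH lij (ltnW ljn)); by case: (H j ljn) => /(_ x).
Qed.

Arguments sc_mono {c n} H i j.

Lemma sc_sub A B k : strict_chain A B k ->
  [/\ is_submod A, is_submod B & msub B A].
Proof.
case=> c [/mext E0 /mext Ek S St]; subst.
split; [exact: S | exact: S | exact: (sc_mono St 0%N k)].
Qed.

Lemma sc0 A : is_submod A -> strict_chain A A 0.
Proof. by move=> SA; exists (fun _ => A); split. Qed.

Lemma sc_AA A k : strict_chain A A k -> k = 0%N.
Proof.
case=> c [/mext E0 /mext Ek S St]; case: k Ek S St => // k Ek S St.
have [_ [x [c1x nc0x]]] := St 0%N isT.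
by exfalso; apply: nc0x; rewrite E0 -Ek; apply: (sc_mono St 1%N k.+1) c1x.
Qed.

Lemma sc_cat A B C k1 k2 : strict_chain A B k1 -> strict_chain B C k2 ->
  strict_chain A C (k2 + k1).
Proof.
case=> c1 [/mext E10 /mext E1k S1 St1]; case=> c2 [/mext E20 /mext E2k S2 St2].
subst.
exists (fun i => if (i <= k2)%N then c2 i else c1 (i - k2)%N); split.
- by rewrite leq0n.
- case: k1 St1 S1 => [|k1] St1 S1; first by rewrite addn0 leqnn E2k.
  rewrite (_ : (k2 + k1.+1 <= k2)%N = false) ?addKn //.
  by apply/negbTE; rewrite -ltnNge addnS ltnS leq_addr.
- move=> i li; case: leqP => l; [exact: S2 | apply: S1; by rewrite leq_subLR].
- move=> i lti; case: (leqP i.+1 k2) => l1.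
    by rewrite (ltnW l1); apply: St2.
  case: (leqP i k2) => l2.
    have ei : i = k2 by apply/eqP; rewrite eqn_leq l2 -ltnS.
    rewrite ei subSnn E2k; apply: St1.
    by move: lti; rewrite ei -{1}[k2]addn0 ltn_add2l.
  rewrite subSn ?(ltnW l2) //; apply: St1.
  by rewrite ltn_subLR ?(ltnW l2).
Qed.

Lemma sc1 A B : is_submod A -> is_submod B -> mssub B A -> strict_chain A B 1.
Proof.
move=> SA SB BA; exists (fun i => if i is 0%N then B else A); split => //.
- by case.
- by case.
Qed.

Lemma sc_step A B C k : is_submod A -> mssub B A -> strict_chain B C k ->
  strict_chain A C k.+1.
Proof.
move=> SA BA cBC; have [SB _ _] := sc_sub cBC.
by rewrite -addn1; apply: sc_cat (sc1 SA SB BA) cBC.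
Qed.

Lemma nsub_eq A B : msub B A -> ~ (exists x, A x /\ ~ B x) -> A = B.
Proof.
move=> BA nex; apply: msubE => // x Ax.
by apply: NNPP => nBx; apply: nex; exists x.
Qed.

Lemma sc_top A B C k : strict_chain B C k -> msub B A -> is_submod A ->
  exists k', (k <= k')%N /\ strict_chain A C k'.
Proof.
move=> cBC BA SA; case: (classic (exists x, A x /\ ~ B x)) => [ex|nex].
  exists k.+1; split => //; apply: (sc_step SA _ cBC); by split.
by rewrite (nsub_eq BA nex); exists k.
Qed.

Lemma sc_bot A B C k : strict_chain A B k -> msub C B -> is_submod C ->
  exists k', (k <= k')%N /\ strict_chain A C k'.
Proof.
move=> cAB CB SC; have [_ SB _] := sc_sub cAB.
case: (classic (exists x, B x /\ ~ C x)) => [ex|nex].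
  exists (1 + k)%N; split; first by rewrite add1n.
  by apply: (sc_cat cAB (sc1 SB SC _)); split.
by rewrite -(nsub_eq CB nex); exists k.
Qed.

Lemma sc_addB Y X B k : strict_chain Y X k -> is_submod B ->
  msub (mcap B Y) X -> strict_chain (msum Y B) (msum X B) k.
Proof.
case=> c [/mext E0 /mext Ek S St] SB BYX; subst.
exists (fun i => msum (c i) B); split => //.
- by move=> i li; apply: msum_sub => //; apply: S.
- move=> i li; split.
    move=> _ [x [y [cx [By ->]]]]; exists x, y; split => //.
    by case: (St i li) => /(_ x cx).
  case: (St i li) => _ [x [c1x nc0x]]; exists x; split.
    by exists x, 0; split => //; split; [apply: sub0 | rewrite addr0].
  move=> [y [b [cy [Bb xE]]]]; apply: nc0x.
  have Yx : c k x by apply: (sc_mono St i.+1 k).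
  have Yy : c k y by apply: (sc_mono St i k) => //; apply: ltnW.
  have bE : b = x - y by rewrite xE addrC addKr.
  have c0b : c 0%N b.
    apply: BYX; split => //; rewrite bE; apply: subB => //; exact: S.
  rewrite xE; apply: subD; [exact: S (ltnW li) | done |].
  by apply: (sc_mono St 0%N i) => //; apply: ltnW.
Qed.

Lemma sc_split k : forall A B C, strict_chain A C k -> is_submod B ->
  msub C B -> msub B A ->
  exists k1 k2, [/\ (k <= k1 + k2)%N, strict_chain A B k1 & strict_chain B C k2].
Proof.
elim: k => [|k IH] A B C.
  move=> cAC SB CB BA; have [SA SC CA] := sc_sub cAC.
  case: cAC => c [/mext E0 /mext Ek _ _]; rewrite E0 in Ek; subst.
  have -> : B = c 0%N by apply: msubE.
  by exists 0%N, 0%N; split => //; apply: sc0.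
move=> cAC SB CB BA.
have [SA SC CA] := sc_sub cAC.
case: (cAC) => c [/mext E0 /mext Ek S St]; subst.
have ck : strict_chain (c k) (c 0%N) k.
  exists c; split => //; move=> i li; [apply: S | apply: St]; exact: leqW.
have Sk : is_submod (c k) by apply: S; apply: leqW.
have Bk : is_submod (mcap B (c k)) by apply: mcap_sub.
have HC : msub (c 0%N) (mcap B (c k)).
  by move=> x c0x; split; [apply: CB | apply: (sc_mono St 0%N k) => //; apply: leqW].
have [k1 [k2 [lek c1 c2]]] := IH _ _ _ ck Bk HC (fun x H => proj2 H).
have c1' := sc_addB c1 SB (fun x Hx => Hx).
have eB : msum (mcap B (c k)) B = B.
  apply: msubE.
    by move=> _ [x [y [[Bx _] [By ->]]]]; apply: subD.
  by move=> x Bx; exists 0, x; split; [apply: sub0 | split => //; rewrite add0r].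
rewrite eB in c1'.
have sumA : msub (msum (c k) B) (c k.+1).
  move=> _ [x [y [cx [By ->]]]]; apply: (subD (S _ (leqnn _))).
    by case: (St k (ltnSn _)) => /(_ x cx).
  by apply: BA.
case: (classic (exists z, c k.+1 z /\ ~ msum (c k) B z)) => [ex|nex].
  have [k2' [le2 c2']] := sc_top c2 (fun x H => proj1 H) SB.
  exists k1.+1, k2'; split.
  - by rewrite addSn ltnS (leq_trans lek) // leq_add2l.
  - by apply: (sc_step (S _ (leqnn _)) _ c1'); split.
  - done.
rewrite -(nsub_eq sumA nex) in c1'.
exists k1, k2.+1; split => //; first by rewrite addnS ltnS.
apply: (sc_step SB _ c2); split; first by move=> x [].
case: (St k (ltnSn _)) => _ [z [z1 nz0]].
have [x [b [cx [Bb zE]]]] : msum (c k) B z by apply: NNPP => H; apply: nex; exists z.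
exists b; split => //; move=> [_ ckb]; apply: nz0; rewrite zE; exact: subD.
Qed.

Lemma sc_pull (r : R) A Y X k : is_submod A -> strict_chain Y X k ->
  Y = mimg r A -> strict_chain A (mpre r A X) k.
Proof.
move=> SA [c [/mext E0 /mext Ek S St]] YE; subst.
exists (fun i => mpre r A (c i)); split => //.
- move=> x; split; first by case.
  by move=> Ax; split => //; rewrite YE; exists x.
- by move=> i li; apply: mpre_sub => //; apply: S.
- move=> i li; split.
    by move=> x [Ax cx]; split => //; case: (St i li) => /(_ _ cx).
  case: (St i li) => _ [z [z1 nz0]].
  have : c k z by apply: (sc_mono St i.+1 k).
  rewrite YE => -[y [Ay zE]]; exists y; split; first by split => //; rewrite -zE.
  by case => _; rewrite -zE.
Qed.

Lemma iter_exists (X : nat -> mset M) h : (forall j, is_submod (X j)) ->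
  hilb_num X h -> forall N, exists k,
  strict_chain (X 0%N) (X N) k /\ k%:Z = \sum_(j < N) sh h j.
Proof.
move=> SX hX; elim=> [|N [k [cN kE]]].
  by exists 0%N; split; [apply: sc0 | rewrite big_ord0].
have [n [[cn _] nE]] := hX N.
exists (n + k)%N; split; first exact: sc_cat cN cn.
by rewrite big_ord_recr /= PoszD kE nE addrC.
Qed.

Lemma iter_bound (X : nat -> mset M) h : (forall j, msub (X j.+1) (X j)) ->
  (forall j, is_submod (X j)) -> hilb_num X h -> forall N k,
  strict_chain (X 0%N) (X N) k -> k%:Z <= \sum_(j < N) sh h j.
Proof.
move=> DX SX hX; elim=> [|N IH] k.
  by move/sc_AA => ->; rewrite big_ord0.
move=> cN.
have mono : forall j, msub (X j) (X 0%N).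
  by elim=> // j IHj x /DX /IHj.
have [k1 [k2 [lek c1 c2]]] := sc_split cN (SX N) (DX N) (mono N).
have := IH _ c1; have [n [[_ nmax] nE]] := hX N.
have := nmax _ c2; rewrite big_ord_recr /=.
have -> : sh h N = n%:Z by rewrite nE.
move: lek; rewrite -!lez_nat PoszD.
move: (\sum_(j < N) sh h j) => S; lia.
Qed.
End Chains.

Lemma key (d c K : int) : c < K -> 0 <= K -> d * K <= c -> d <= 0.
Proof. nia. Qed.

Lemma final (eE eN eM fE fN fM hE0 hN0 : int) (B : nat) :
 (forall N, (B <= N)%N -> eM * N%:Z - fM <= eN * N%:Z - fN) ->
 (forall N, (B <= N)%N -> eE * (N.+1)%:Z - fE <= eN * N%:Z - fN + hE0) ->
 (forall N, (B <= N)%N -> eN * (N.+1)%:Z - fN <= eE * (N.+1)%:Z - fE + hN0) ->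
 eM - hE0 <= fE - fN.
Proof.
move=> H1 H2 H3.
pose K := (B + absz (fM - fN)%R + absz (fE - fN + hE0 - eE)%R + absz (fN - fE + hN0)%R + 1)%N.
have lB : (B <= K)%N by rewrite /K; lia.
have := H1 K lB; have := H2 K lB; have := H3 K lB.
have a1 := lez_abs (fM - fN); have a2 := lez_abs (fE - fN + hE0 - eE).
have a3 := lez_abs (fN - fE + hN0).
have KE : (K%:Z = B%:Z + (absz (fM - fN)%R)%:Z + (absz (fE - fN + hE0 - eE)%R)%:Z + (absz (fN - fE + hN0)%R)%:Z + 1).
  by rewrite /K !PoszD.
have KS : (K.+1)%:Z = K%:Z + 1 by rewrite -addn1 PoszD.
rewrite !KS.
move: (K%:Z) KE => Kz KE h3 h2 h1.
have d1 : eM - eN <= 0.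
  apply: (@key _ (fM - fN) Kz); lia.
have d2 : eE - eN <= 0.
  apply: (@key _ (fE - fN + hE0 - eE) Kz); lia.
have d3 : eN - eE <= 0.
  apply: (@key _ (fN - fE + hN0) (Kz + 1)); lia.
have eEN : eE = eN by lia.
subst eE; lia.
Qed.

Lemma mulnz (x : int) (n : nat) : x *+ n = x * n%:Z.
Proof. by rewrite -mulr_natr natz. Qed.

Section Filt.
Variables (R : comNzRingType) (M : lmodType R) (q : mset R) (F : nat -> mset M) (a : R).
Hypotheses (qF : q_filtration q F) (qa : q a).

Lemma aF j x : F j x -> F j.+1 (a *: x).
Proof.
case: qF => _ _ _ MF Fx; apply: MF.
exists 1%N, (fun _ => a), (fun _ => x); split; last by rewrite big_ord1.
by move=> i; split.
Qed.

Lemma NsubF j : msub (@N_filt R M a j) (F j).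
Proof.
elim: j => [|j IH] x [y ->]; first by case: qF => F0 _ _ _; apply: F0.
by rewrite exprS -scalerA; apply: aF; apply: IH; exists y.
Qed.
End Filt.

Theorem proposition2p7 (R : comNzRingType) (M : lmodType R)
  (m q : mset R) (F : nat -> mset M) (a : R) (hE hN hM : {poly int}) :
  noetherian R -> is_local m -> infinite_residue m -> m_primary m q ->
  fin_gen M -> module_dim_one M ->
  good_filtration q F -> superficial q F a ->
  hilb_num (E_filt a F) hE -> hilb_num (@N_filt R M a) hN -> hilb_num F hM ->
  hilb_e 0 hM - hM`_0 <= hilb_e 1 hE - hilb_e 1 hN.
Proof.
move=> _ _ _ _ _ _ [qF _] [qa _] hEE hNN hMM.
have [F0 SF DF MF] := qF.
pose E := E_filt a F; pose Nf := @N_filt R M a.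
have NE : forall j, Nf j = mimg (a ^+ j) (@mall R M).
  move=> j; apply: mext => x; split; first by case=> y ->; exists y.
  by case=> y [_ ->]; exists y.
have SN : forall j, is_submod (Nf j) by move=> j; rewrite NE; apply: mimg_sub.
have SE : forall j, is_submod (E j).
  by case=> [|k]; [apply: mall_sub | apply: (mimg_sub (a ^+ k) (SF 1%N))].
have DN : forall j, msub (Nf j.+1) (Nf j).
  by move=> j x [y ->]; exists (a *: y); rewrite scalerA -exprSr.
have DE : forall j, msub (E j.+1) (E j).
  case=> [|k] x //= [y [F1y ->]]; exists (a *: y); split.
    by apply: DF; apply: (aF qF qa).
  by rewrite scalerA -exprSr.
have E0 : E 0%N = @mall R M by [].
have N0 : Nf 0%N = @mall R M.
  by apply: mext => x; split => // _; exists x; rewrite scale1r.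
have F0' : F 0%N = @mall R M by apply: mext => x; split => // _; apply: F0.
have E1 : E 1%N = F 1%N.
  by apply: mext => x; split; [case=> y [Fy ->]; rewrite scale1r | exists x; rewrite scale1r].
have I1 : forall N, \sum_(j < N) sh hM j <= \sum_(j < N) sh hN j.
  move=> N; have [k [cF kE]] := iter_exists SF hMM N.
  rewrite F0' in cF.
  have [k' [lk ck']] := sc_bot cF (NsubF qF qa (j:=N)) (SN N).
  rewrite -N0 in ck'; have := iter_bound DN SN hNN ck'.
  rewrite -kE; move: lk; rewrite -lez_nat; move: (\sum_(j < N) sh hN j) => S; lia.
have := hEE 0%N; rewrite -/E => -[nE0 [[cE0 mE0] nE0E]].
rewrite big_ord1 E0 E1 in cE0 mE0 nE0E.
have I2 : forall N, \sum_(j < N.+1) sh hE j <= \sum_(j < N) sh hN j + hE`_0.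
  move=> N; have [k [cE kE]] := iter_exists SE hEE N.+1.
  have s1 : msub (E N.+1) (Nf N) by move=> x [y [_ ->]]; exists y.
  have [k1 [k2 [lek c1 c2]]] := sc_split cE (SN N) s1 (fun x _ => I).
  rewrite E0 -N0 in c1; have b1 := iter_bound DN SN hNN c1.
  have c2' := sc_pull (@mall_sub R M) c2 (NE N).
  have s2 : msub (F 1%N) (mpre (a ^+ N) (@mall R M) (E N.+1)).
    by move=> x Fx; split => //; exists x.
  have [k2' [l2 c2'']] := sc_bot c2' s2 (SF 1%N).
  have b2 := mE0 _ c2''.
  rewrite -kE -nE0E; move: lek l2 b2; rewrite -!lez_nat PoszD.
  move: b1; move: (\sum_(j < N) sh hN j) => S; lia.
have := hNN 0%N; rewrite -/Nf => -[nN0 [[cN0 mN0] nN0E]].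
rewrite big_ord1 in nN0E.
have I3 : forall N, \sum_(j < N.+1) sh hN j <= \sum_(j < N.+1) sh hE j + hN`_0.
  move=> N; have [k [cN kE]] := iter_exists SN hNN N.+1.
  have s1 : msub (Nf N.+1) (E N.+1).
    move=> x [y ->]; exists (a *: y); split; first by apply: (aF qF qa); apply: F0.
    by rewrite scalerA -exprSr.
  have s0 : msub (E N.+1) (Nf 0%N) by rewrite N0.
  have [k1 [k2 [lek c1 c2]]] := sc_split cN (SE N.+1) s1 s0.
  rewrite N0 -E0 in c1; have b1 := iter_bound DE SE hEE c1.
  have c2' := sc_pull (SF 1%N) c2 (erefl (E N.+1)).
  have s2 : msub (Nf 1%N) (mpre (a ^+ N) (F 1%N) (Nf N.+1)).
    move=> x [y ->]; split; first by rewrite expr1; apply: (aF qF qa); apply: F0.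
    by exists y; rewrite scalerA -exprD addn1.
  have [k2' [l2 c2'']] := sc_bot c2' s2 (SN 1%N).
  have [k2'' [l2' c3]] := sc_top c2'' (fun x _ => I) (@mall_sub R M).
  have b2 : (k2'' <= nN0)%N by apply: mN0; rewrite N0; exact: c3.
  rewrite -kE -nN0E; move: lek l2 l2' b2; rewrite -!lez_nat PoszD.
  move: b1; move: (\sum_(j < N.+1) sh hE j) => S; lia.
have [nM0 [[cM0 mM0] nM0E]] := hMM 0%N.
rewrite big_ord1 F0' in nM0E cM0 mM0.
have eq0 : hM`_0 = hE`_0.
  have := mM0 _ cE0; have := mE0 _ cM0; rewrite -nM0E -nE0E -!lez_nat; lia.
rewrite eq0 /hilb_e nderivn0 -/(hilb_e 1 hE) -/(hilb_e 1 hN).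
pose B := (size hE + size hN + size hM)%N.
have lE : forall N, (B <= N)%N -> (size hE <= N)%N by move=> N; rewrite /B; lia.
have lN : forall N, (B <= N)%N -> (size hN <= N)%N by move=> N; rewrite /B; lia.
have lM : forall N, (B <= N)%N -> (size hM <= N)%N by move=> N; rewrite /B; lia.
apply: (@final hE.[1] hN.[1] hM.[1] _ _ (hilb_e 1 hM) _ hN`_0 B).
- move=> N lB; have := I1 N.
  by rewrite !sum_sh_big ?lN ?lM // !mulnz.
- move=> N lB; have := I2 N.
  by rewrite !sum_sh_big ?lN ?(leqW (lE _ lB)) // !mulnz.
- move=> N lB; have := I3 N.
  by rewrite !sum_sh_big ?(leqW (lN _ lB)) ?(leqW (lE _ lB)) // !mulnz.
Qed.
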